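(* Assume (A1)–(A5) hold, and let $\{u_k\}_{k\ge0}$ be the exact-data iteration defined below. Then $u_k\in\mathcal B_\wp(u^\dagger)$ for all $k\ge0$, and $$\|u_{k+1}-u^\dagger\|^2-\|u_k-u^\dagger\|^2\le-2\mathcal C_0\|\mathcal F(u_k)-v\|^2\qquad\text{for all }k\ge0,$$ where $\mathcal C_0:=(1-\eta)\zeta-\nu_0(\wp+\nu_1)-\zeta_0^2>0$. Consequently $\{\|u_k-u^\dagger\|\}_{k\ge0}$ is monotonically decreasing, and $$\sum_{k=0}^\infty\|\mathcal F(u_k)-v\|^2\le\frac1{2\mathcal C_0}\|u_0-u^\dagger\|^2<\infty .$$
   Context: Spaces and operator. Let $\mathcal U=\mathbb R^N$ and $\mathcal V=\mathbb R^M$ carry the Euclidean inner product and norm. Let $\mathcal F:\mathcal D(\mathcal F)\subset\mathcal U\to\mathcal V$ be a (possibly nonlinear) operator, let $v\in\mathcal V$ be exact data, and let $\mathcal B_r(x)$ denote the closed ball of radius $r$ centred at $x$. Images and graph Laplacian. Elements of $\mathcal U$ are images on a pixel grid $\mathcal S=\{1,\dots,p\}\times\{1,\dots,q\}$ with $N=pq$. Fix $R\in(0,\infty)$, $\lambda>0$ and a metric $d$ on $\mathcal S$. For $u\in\mathcal U$, define $$(W_u)_{ab}=\mathbf 1_{(0,R]}(d(a,b))\exp(-|u(a)-u(b)|^2/\lambda),$$ let $D_u$ be the diagonal matrix of row sums of $W_u$, and set $\Delta_u=D_u-W_u$. Exact-data iteration. Let $\Psi:\mathcal V\to\mathcal U$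 be a reconstruction map and set $u_0=\Psi(v)$. Define $$u_{k+1}=u_k-\alpha_k\mathcal F'(u_k)^*\big(\mathcal F(u_k)-v\big)-\beta_k\Delta_{u_k}u_k,$$ with $$\alpha_k=\min\Big\{\frac{\zeta_0\|\mathcal F(u_k)-v\|}{\|\mathcal F'(u_k)^*(\mathcal F(u_k)-v)\|},\zeta_1\Big\}.$$ If $\|\Delta_{u_k}u_k\|\ne0$, then $$\beta_k=\min\Big\{\frac{\nu_0\|\mathcal F(u_k)-v\|^2}{\|\Delta_{u_k}u_k\|},\frac{\nu_1}{\|\Delta_{u_k}u_k\|},\nu_2\Big\},$$ and otherwise $\beta_k=0$. Here $\zeta_0,\zeta_1,\nu_0,\nu_1,\nu_2>0$ are constants, and $\zeta>0$ is a constant with $\zeta\le\alpha_k$ for all $k$. Operator assumptions. There exist $\wp>0$, $B>0$, $\eta\in[0,1)$ and $L\ge0$ such that for all $u,w\in\mathcal B_{3\wp}(u_0)\subset\mathcal D(\mathcal F)$: - (A1) $\mathcal F$ is Fréchet differentiable with $u\mapsto\mathcal F'(u)$ continuous; - (A2) $\|\mathcal F'(u)\|\le B$; - (A3) $\|\mathcal F(u)-\mathcal F(w)-\mathcal F'(w)(u-w)\|\le\eta\|\mathcal F(u)-\mathcal F(w)\|$; - (A4) $\|\mathcal F'(u)-\mathcal F'(w)\|\le L\|u-w\|$; - (A5) there exists $u^\dagger\in\mathcal B_\wp(u_0)$ with $\mathcal F(u^\dagger)=v$. Standing parameter condition. Fix $\mathcal H>\frac{1+\eta}{1-\eta}$.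 The constant $\zeta$ is assumed to satisfy $$\zeta>\frac{\nu_0(\wp+\nu_1)+\zeta_0^2}{1-\eta-\frac{1+\eta}{\mathcal H}} .$$ *)

(* Defs.v *)
From HB Require Import structures.
From mathcomp Require Import all_boot all_order all_algebra.
From mathcomp Require Import reals sequences exp.
Set Implicit Arguments. Unset Strict Implicit. Unset Printing Implicit Defensive.
Import Order.TTheory GRing.Theory Num.Theory.
Local Open Scope ring_scope.

Definition dotp {R : realType} {I : finType} (x y : {ffun I -> R}) : R :=
  \sum_i x i * y i.
Definition nrm {R : realType} {I : finType} (x : {ffun I -> R}) : R :=
  Num.sqrt (dotp x x).

Definition inball {R : realType} {I : finType} (c : {ffun I -> R}) (r : R)
  (x : {ffun I -> R}) : Prop := nrm (x - c) <= r.

(* A linear map R^J -> R^I given by its matrix A (entries A i j),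
   and its Euclidean adjoint (the transpose). *)
Definition app {R : realType} {I J : finType} (A : I -> J -> R)
  (h : {ffun J -> R}) : {ffun I -> R} := [ffun i => \sum_j A i j * h j].
Definition adj {R : realType} {I J : finType} (A : I -> J -> R)
  (r : {ffun I -> R}) : {ffun J -> R} := [ffun j => \sum_i A i j * r i].

Definition frechet_at {R : realType} {I J : finType}
  (F : {ffun J -> R} -> {ffun I -> R}) (A : I -> J -> R) (u : {ffun J -> R}) :=
  forall eps : R, 0 < eps -> exists delta : R, 0 < delta /\
    forall h : {ffun J -> R}, nrm h < delta ->
      nrm (F (u + h) - F u - app A h) <= eps * nrm h.

(* Pixel grid S = {1..p} x {1..q}; images are elements of R^S, N = p q. *)
Definition pixel (p q : nat) : finType := ('I_p * 'I_q)%type.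

Definition Wgt {R : realType} {S : finType} (d : S -> S -> R) (Rr lam : R)
  (u : {ffun S -> R}) (a b : S) : R :=
  if (0 < d a b) && (d a b <= Rr) then expR (- (`|u a - u b| ^+ 2) / lam) else 0.

(* Delta_u w = (D_u - W_u) w, D_u diagonal matrix of row sums of W_u *)
Definition lap {R : realType} {S : finType} (d : S -> S -> R) (Rr lam : R)
  (u w : {ffun S -> R}) : {ffun S -> R} :=
  [ffun a => (\sum_b Wgt d Rr lam u a b) * w a - \sum_b Wgt d Rr lam u a b * w b].

Section Iteration.
Context {R : realType} {S I : finType}
  (F : {ffun S -> R} -> {ffun I -> R}) (Jac : {ffun S -> R} -> I -> S -> R)
  (v : {ffun I -> R}) (Psi : {ffun I -> R} -> {ffun S -> R})
  (d : S -> S -> R) (Rr lam z0 z1 n0 n1 n2 : R).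

(* step size alpha_k (MathComp convention x / 0 = 0) *)
Definition alpha_of (u : {ffun S -> R}) : R :=
  Num.min (z0 * nrm (F u - v) / nrm (adj (Jac u) (F u - v))) z1.

Definition beta_of (u : {ffun S -> R}) : R :=
  let Lu := lap d Rr lam u u in
  if nrm Lu != 0 then
    Num.min (Num.min (n0 * nrm (F u - v) ^+ 2 / nrm Lu) (n1 / nrm Lu)) n2
  else 0.

Definition step (u : {ffun S -> R}) : {ffun S -> R} :=
  [ffun a => u a - alpha_of u * adj (Jac u) (F u - v) a
                  - beta_of u * lap d Rr lam u u a].

Fixpoint iterate (k : nat) : {ffun S -> R} :=
  match k with 0 => Psi v | k'.+1 => step (iterate k') end.
End Iteration.

(* Main.v *)
Require Import Defs.
From HB Require Import structures.
From mathcomp Require Import all_boot all_order all_algebra.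
From mathcomp Require Import reals sequences exp.
From mathcomp Require Import ring lra.
Import Order.TTheory GRing.Theory Num.Theory.
Local Open Scope ring_scope.
Set Implicit Arguments. Unset Strict Implicit. Unset Printing Implicit Defensive.

Section Hilb.
Variable (R : realType) (I : finType).
Implicit Types x y z : {ffun I -> R}.

Definition sc (a : R) x : {ffun I -> R} := [ffun i => a * x i].

Lemma dotpC x y : dotp x y = dotp y x.
Proof. by apply: eq_bigr => i _; rewrite mulrC. Qed.
Lemma dotpDl x y z : dotp (x + y) z = dotp x z + dotp y z.
Proof. by rewrite /dotp -big_split; apply: eq_bigr => i _; rewrite ffunE mulrDl. Qed.
Lemma dotpNl x y : dotp (- x) y = - dotp x y.
Proof. by rewrite /dotp -sumrN; apply: eq_bigr => i _; rewrite ffunE mulNr. Qed.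
Lemma dotpBl x y z : dotp (x - y) z = dotp x z - dotp y z.
Proof. by rewrite dotpDl dotpNl. Qed.
Lemma dotpZl a x y : dotp (sc a x) y = a * dotp x y.
Proof. by rewrite /dotp mulr_sumr; apply: eq_bigr => i _; rewrite ffunE mulrA. Qed.
Lemma dotpDr x y z : dotp z (x + y) = dotp z x + dotp z y.
Proof. by rewrite dotpC dotpDl !(dotpC z). Qed.
Lemma dotpBr x y z : dotp z (x - y) = dotp z x - dotp z y.
Proof. by rewrite dotpC dotpBl !(dotpC z). Qed.
Lemma dotpZr a x y : dotp y (sc a x) = a * dotp y x.
Proof. by rewrite dotpC dotpZl dotpC. Qed.
Lemma dotp_ge0 x : 0 <= dotp x x.
Proof. by apply: sumr_ge0 => i _; rewrite sqr_ge0. Qed.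
Lemma nrm_ge0 x : 0 <= nrm x.
Proof. exact: sqrtr_ge0. Qed.
Lemma nrm_sq x : nrm x ^+ 2 = dotp x x.
Proof. by rewrite /nrm sqr_sqrtr // dotp_ge0. Qed.

Lemma dotp0 x : dotp x x = 0 -> forall y, dotp x y = 0.
Proof.
move=> h0 y.
have hx : forall i, x i = 0.
  move=> i; have /psumr_eq0P h := h0.
  have := h (fun j _ => sqr_ge0 (x j)) i isT.
  by move/eqP; rewrite mulf_eq0 orbb => /eqP.
by rewrite /dotp big1 // => i _; rewrite hx mul0r.
Qed.

Lemma sq_le (a b : R) : 0 <= b -> a ^+ 2 <= b ^+ 2 -> a <= b.
Proof.
move=> hb h; case: (lerP a b) => // hab.
have h1 : 0 < a - b by rewrite subr_gt0.
have h2 : 0 < a + b by apply: (lt_le_trans (y := a - b)) => //; lra.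
have h3 : 0 < (a - b) * (a + b) by rewrite mulr_gt0.
have e : (a - b) * (a + b) = a ^+ 2 - b ^+ 2 by ring.
rewrite e in h3; lra.
Qed.

Lemma CS x y : dotp x y <= nrm x * nrm y.
Proof.
set A := dotp x x; set Bb := dotp y y; set C := dotp x y.
have hA := dotp_ge0 x; have hB := dotp_ge0 y.
have key : C ^+ 2 <= A * Bb.
  have [A0|Apos] := eqVneq A 0.
    by rewrite /C dotp0 // A0 expr0n /= mul0r.
  have Ap : 0 < A by rewrite lt_neqAle eq_sym Apos hA.
  have h := dotp_ge0 (sc C x - sc A y).
  rewrite !(dotpBl, dotpBr, dotpZl, dotpZr) -/A -/Bb -/C (dotpC y x) -/C in h.
  have h2 : 0 <= A * (A * Bb - C ^+ 2) by move: h; congr (_ <= _); ring.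
  rewrite -subr_ge0; move: h2; rewrite pmulr_rge0 //.
have hx := nrm_ge0 x; have hy := nrm_ge0 y.
have ex := nrm_sq x; have ey := nrm_sq y.
rewrite -/A in ex; rewrite -/Bb in ey.
apply: sq_le; first by rewrite mulr_ge0.
by rewrite exprMn ex ey.
Qed.

Lemma nrm_le x c : 0 <= c -> dotp x x <= c ^+ 2 -> nrm x <= c.
Proof. by move=> hc h; apply: sq_le => //; rewrite nrm_sq. Qed.

Lemma nrmD x y : nrm (x + y) <= nrm x + nrm y.
Proof.
apply: nrm_le; first by rewrite addr_ge0 ?nrm_ge0.
rewrite dotpDl !dotpDr -!nrm_sq (dotpC y x).
have := CS x y; nra.
Qed.

Lemma nrmN x : nrm (- x) = nrm x.
Proof. by rewrite /nrm dotpNl dotpC dotpNl opprK. Qed.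

Lemma nrmB x y : nrm (x - y) = nrm (y - x).
Proof. by rewrite -nrmN opprB. Qed.

Lemma nrmZ a x : nrm (sc a x) = `|a| * nrm x.
Proof.
by rewrite /nrm dotpZl dotpZr mulrA -expr2 sqrtrM ?sqr_ge0 // sqrtr_sqr.
Qed.
End Hilb.

Section Lin.
Variable (R : realType) (I J : finType).
Lemma adjP (A : I -> J -> R) h r : dotp (app A h) r = dotp h (adj A r).
Proof.
rewrite /dotp.
under eq_bigr do rewrite ffunE mulr_suml.
rewrite exchange_big /=; apply: eq_bigr => j _.
rewrite ffunE mulr_sumr; apply: eq_bigr => i _; ring.
Qed.
Lemma appN (A : I -> J -> R) h : app A (- h) = - app A h.
Proof.
apply/ffunP => i; rewrite !ffunE -sumrN; apply: eq_bigr => j _; rewrite ffunE; ring.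
Qed.
End Lin.
Section Step.
Variable (R : realType) (I : finType).
Lemma step_est (e g D : {ffun I -> R}) (nr al be ze eta z0 n0 n1 wp : R) :
  nrm e <= wp -> (1 - eta) * nr ^+ 2 <= dotp e g -> eta < 1 -> 0 <= nr ->
  0 < ze -> ze <= al -> al * nrm g <= z0 * nr ->
  0 <= be -> be * nrm D <= n0 * nr ^+ 2 -> be * nrm D <= n1 -> 0 < n0 -> 0 < n1 ->
  nrm (e - (sc al g + sc be D)) ^+ 2 - nrm e ^+ 2 <=
  - (2 * ((1 - eta) * ze - n0 * (wp + n1) - z0 ^+ 2)) * nr ^+ 2.
Proof.
move=> he heg heta hnr hze hal hag hbe hb1 hb2 hn0 hn1.
rewrite !nrm_sq.
set a := sc al g; set b := sc be D.
have hM : dotp (a + b) (a + b) <= 2 * dotp a a + 2 * dotp b b.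
  have := dotp_ge0 (a - b).
  rewrite !(dotpBl, dotpBr, dotpDl, dotpDr) (dotpC b a); lra.
have ea : dotp a a = (al * nrm g) ^+ 2 by rewrite /a dotpZl dotpZr -nrm_sq; ring.
have eb : dotp b b = (be * nrm D) ^+ 2 by rewrite /b dotpZl dotpZr -nrm_sq; ring.
have hal0 : 0 <= al * nrm g by apply: mulr_ge0; [lra | exact: nrm_ge0].
have hbD0 : 0 <= be * nrm D by apply: mulr_ge0; [lra | exact: nrm_ge0].
have h1 : (al * nrm g) ^+ 2 <= z0 ^+ 2 * nr ^+ 2.
  rewrite -exprMn; apply: lerXn2r => //; rewrite ?nnegrE //; lra.
have h2 : (be * nrm D) ^+ 2 <= n0 * n1 * nr ^+ 2.
  rewrite expr2; have := ler_pM hbD0 hbD0 hb1 hb2; lra.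
have hc : - dotp e D <= nrm e * nrm D.
  by rewrite -dotpNl -(nrmN e); apply: CS.
have h3 : - (be * dotp e D) <= wp * (n0 * nr ^+ 2).
  have := ler_wpM2l hbe hc.
  have hd : nrm e * (be * nrm D) <= wp * (n0 * nr ^+ 2).
    apply: ler_pM => //; rewrite ?nrm_ge0 //; lra.
  lra.
have hr2 : 0 <= nr ^+ 2 by rewrite sqr_ge0.
have h4 : ze * ((1 - eta) * nr ^+ 2) <= al * dotp e g.
  apply: ler_pM => //; [lra| rewrite mulr_ge0 //; lra].
have -> : dotp (e - (a + b)) (e - (a + b)) =
   dotp e e - 2 * (al * dotp e g + be * dotp e D) + dotp (a + b) (a + b).
  rewrite !(dotpBl, dotpBr, dotpDl, dotpDr) /a /b !(dotpZl, dotpZr) (dotpC g e) (dotpC D e).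
  ring.
rewrite ea eb in hM.
lra.
Qed.
End Step.
Theorem mainTheorem3 (R : realType) (p q M : nat)
  (F : {ffun pixel p q -> R} -> {ffun 'I_M -> R})
  (Jac : {ffun pixel p q -> R} -> 'I_M -> pixel p q -> R)
  (v : {ffun 'I_M -> R}) (Psi : {ffun 'I_M -> R} -> {ffun pixel p q -> R})
  (d : pixel p q -> pixel p q -> R) (Rr lam : R)
  (z0 z1 n0 n1 n2 zeta : R) (wp B eta L H : R) (udag : {ffun pixel p q -> R}) :
  (* metric d on the grid, R in (0,oo), lambda > 0 *)
  (forall a b, d a b = 0 <-> a = b) ->
  (forall a b, d a b = d b a) ->
  (forall a b c, d a c <= d a b + d b c) ->
  0 < Rr -> 0 < lam ->
  (* constants *)
  0 < z0 -> 0 < z1 -> 0 < n0 -> 0 < n1 -> 0 < n2 -> 0 < zeta ->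
  0 < wp -> 0 < B -> 0 <= eta -> eta < 1 -> 0 <= L ->
  let u0 := Psi v in
  let u := iterate F Jac v Psi d Rr lam z0 z1 n0 n1 n2 in
  (forall k, zeta <= alpha_of F Jac v z0 z1 (u k)) ->
  (* (A1) *)
  (forall w, inball u0 (3 * wp) w -> frechet_at F (Jac w) w) ->
  (forall w, inball u0 (3 * wp) w -> forall eps, 0 < eps ->
     exists delta, 0 < delta /\ forall w', inball u0 (3 * wp) w' ->
       nrm (w' - w) < delta ->
       forall h, nrm (app (Jac w') h - app (Jac w) h) <= eps * nrm h) ->
  (* (A2) ||F'(w)|| <= B *)
  (forall w, inball u0 (3 * wp) w -> forall h, nrm (app (Jac w) h) <= B * nrm h) ->
  (* (A3) tangential cone condition *)
  (forall w w', inball u0 (3 * wp) w -> inball u0 (3 * wp) w' ->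
     nrm (F w - F w' - app (Jac w') (w - w')) <= eta * nrm (F w - F w')) ->
  (* (A4) ||F'(w) - F'(w')|| <= L ||w - w'|| *)
  (forall w w', inball u0 (3 * wp) w -> inball u0 (3 * wp) w' ->
     forall h, nrm (app (Jac w) h - app (Jac w') h) <= L * nrm (w - w') * nrm h) ->
  (* (A5) *)
  inball u0 wp udag -> F udag = v ->
  (* standing parameter condition *)
  (1 + eta) / (1 - eta) < H ->
  (n0 * (wp + n1) + z0 ^+ 2) / (1 - eta - (1 + eta) / H) < zeta ->
  let C0 := (1 - eta) * zeta - n0 * (wp + n1) - z0 ^+ 2 in
  0 < C0 /\
  (forall k, inball udag wp (u k)) /\
  (forall k, nrm (u k.+1 - udag) ^+ 2 - nrm (u k - udag) ^+ 2
               <= - (2 * C0) * nrm (F (u k) - v) ^+ 2) /\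
  (forall k, nrm (u k.+1 - udag) <= nrm (u k - udag)) /\
  (forall n, \sum_(k < n) nrm (F (u k) - v) ^+ 2 <= nrm (u0 - udag) ^+ 2 / (2 * C0)).
Proof.
move=> hd1 hd2 hd3 hRr hlam hz0 hz1 hn0 hn1 hn2 hze hwp hB heta0 heta1 hL u0 u
  halpha hA1 hA1c hA2 hA3 hA4 hud hFud hH hzeta C0.
have hC0 : 0 < C0.
  have hH0 : 0 < H by apply: lt_trans hH; rewrite divr_gt0 //; lra.
  have hD : (1 + eta) / H < 1 - eta.
    rewrite ltr_pdivrMr // ; rewrite ltr_pdivrMr in hH; [nra | lra].
  have hDp : 0 < 1 - eta - (1 + eta) / H by lra.
  rewrite ltr_pdivrMr // in hzeta.
  have hq : 0 <= (1 + eta) / H by rewrite divr_ge0 //; lra.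
  rewrite /C0; nra.
have hball3 : forall w, nrm (w - udag) <= wp -> inball u0 (3 * wp) w.
  move=> w hw; rewrite /inball.
  have -> : w - u0 = (w - udag) + (udag - u0) by rewrite addrA subrK.
  apply: le_trans (nrmD _ _) _; move: hud; rewrite /inball => hud; lra.
have hstep : forall k, nrm (u k - udag) <= wp ->
   nrm (u k.+1 - udag) ^+ 2 - nrm (u k - udag) ^+ 2 <= - (2 * C0) * nrm (F (u k) - v) ^+ 2.
  move=> k hk.
  set al := alpha_of F Jac v z0 z1 (u k).
  set be := beta_of F v d Rr lam n0 n1 n2 (u k).
  set g := adj (Jac (u k)) (F (u k) - v).
  set D := lap d Rr lam (u k) (u k).
  have -> : u k.+1 - udag = (u k - udag) - (sc al g + sc be D).
    apply/ffunP => i.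
    have -> : u k.+1 = step F Jac v d Rr lam z0 z1 n0 n1 n2 (u k) by [].
    rewrite !ffunE -/al -/be -/g -/D; ring.
  have hin := hball3 _ hk.
  have hinud : inball u0 (3 * wp) udag by rewrite /inball; move: hud; rewrite /inball; lra.
  have hA := hA3 _ _ hinud hin.
  rewrite hFud in hA.
  set r := F (u k) - v in hA *.
  set e := u k - udag in hA *.
  have ew : v - F (u k) - app (Jac (u k)) (udag - u k) = app (Jac (u k)) e - r.
    rewrite -[udag - u k]opprB appN -/e; apply/ffunP => i; rewrite !ffunE; ring.
  rewrite ew in hA; rewrite -[v - F (u k)]opprB -/r nrmN in hA.
  have heg : (1 - eta) * nrm r ^+ 2 <= dotp e g.
    rewrite /g -adjP.
    have -> : app (Jac (u k)) e = (app (Jac (u k)) e - r) + r by rewrite subrK.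
    rewrite dotpDl -nrm_sq.
    have := CS (- (app (Jac (u k)) e - r)) r; rewrite dotpNl nrmN.
    have := nrm_ge0 r.
    have := ler_wpM2r (nrm_ge0 r) hA.
    rewrite -/r expr2 !mulrA; lra.
  have hag : al * nrm g <= z0 * nrm r.
    have [g0|gp] := eqVneq (nrm g) 0.
      by rewrite g0 mulr0 mulr_ge0 ?nrm_ge0 //; lra.
    have gpos : 0 < nrm g by rewrite lt_neqAle eq_sym gp nrm_ge0.
    rewrite -ler_pdivlMr //.
    by rewrite /al /alpha_of ge_min -/r -/g lexx.
  have hbe : [/\ 0 <= be, be * nrm D <= n0 * nrm r ^+ 2 & be * nrm D <= n1].
    rewrite /be /beta_of -/D -/r; case: ifP => hD; last by rewrite !mul0r; split; [lra | rewrite mulr_ge0 ?sqr_ge0 //; lra | lra].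
    have Dpos : 0 < nrm D by rewrite lt_neqAle eq_sym hD nrm_ge0.
    have h1 : 0 <= n0 * nrm r ^+ 2 / nrm D by rewrite divr_ge0 ?nrm_ge0 // mulr_ge0 ?sqr_ge0 //; lra.
    have h2 : 0 <= n1 / nrm D by rewrite divr_ge0 ?nrm_ge0 //; lra.
    split.
    - by rewrite !le_min h1 h2 /=; lra.
    - by rewrite -ler_pdivlMr // !ge_min lexx.
    - by rewrite -ler_pdivlMr // !ge_min lexx orbT.
  case: hbe => hbe0 hbe1 hbe2.
  apply: step_est => //; try lra.
  - exact: nrm_ge0.
  - exact: halpha.
have hr0 : forall k, 0 <= 2 * C0 * nrm (F (u k) - v) ^+ 2.
  by move=> k; rewrite mulr_ge0 ?sqr_ge0 // mulr_ge0 //; lra.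
have e0 : u 0%N = u0 by [].
have hballk : forall k, nrm (u k - udag) <= wp.
  move=> k0; elim: k0 => [|k IH]; first by rewrite e0 nrmB.
  have hk := hstep k IH; apply: le_trans IH; apply: sq_le; first exact: nrm_ge0.
  move: hk; have := hr0 k; lra.
have hmono : forall k, nrm (u k.+1 - udag) <= nrm (u k - udag).
  move=> k; apply: sq_le; first exact: nrm_ge0.
  have := hstep k (hballk k); have := hr0 k; lra.
have hsum : forall n, 2 * C0 * \sum_(k < n) nrm (F (u k) - v) ^+ 2 <=
    nrm (u 0%N - udag) ^+ 2 - nrm (u n - udag) ^+ 2.
  move=> n0'; elim: n0' => [|n IH]; first by rewrite big_ord0 mulr0 subrr.
  rewrite big_ord_recr /= mulrDr; have := hstep n (hballk n); lra.
split; first exact: hC0.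
split; first exact: hballk.
split; first by move=> k; apply: hstep.
split; first exact: hmono.
move=> n; rewrite ler_pdivlMr ?mulr_gt0 //.
rewrite mulrC -e0; have := hsum n; have := sqr_ge0 (nrm (u n - udag)); lra.
Qed.
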